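(* Assume $P_S(s)>0$ for all $s$ and $P_{Y|X}(y|x)>0$ for all $x,y$, and let $f:(0,\infty)\to\mathbb R$ be continuously differentiable with the saddle property. Let $Q\in\mathcal Q$, put $a(\hat s|s)=Q_{S,\widehat S}(s,\hat s)/P_S(s)$ and $b=Q_X$, and assume $a(\hat s|s)>0$ for all $s,\hat s$. Let $\lambda\ge0$ satisfy $\lambda\big(\Psi(b)-\Phi(a)\big)=0$, let $\mu^b\in\mathbb R$, $\mu^a:\mathcal S\to\mathbb R$ be arbitrary, and let $\nu^b:\mathcal X\to[0,\infty)$ satisfy $\sum_x\nu^b(x)b(x)=0$. Define $$\delta(s,\hat s)=-\frac{\lambda}{P_S(s)}\frac{\partial\Phi}{\partial a(\hat s|s)}(a)+\mu^a(s),\qquad \rho(x)=\lambda\frac{\partial\Psi}{\partial b(x)}(b)+\mu^b+\nu^b(x).$$ Then $Q$ minimizes $Q'\mapsto\sum_{(s,x,y,\hat s)\in\mathcal Z}Q'(s,x,y,\hat s)\big(\delta(s,\hat s)+\rho(x)\big)$ over $Q'\in\mathcal Q$.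
   Context: $\mathcal S,\mathcal X,\mathcal Y,\widehat{\mathcal S}$ are finite nonempty sets, $\mathcal Z=\mathcal S\times\mathcal X\times\mathcal Y\times\widehat{\mathcal S}$, $P_S$ a fixed pmf on $\mathcal S$, $P_{Y|X}$ a fixed channel from $\mathcal X$ to $\mathcal Y$. $\mathcal Q$ is the set of pmfs on $\mathcal Z$ of the form $Q(s,x,y,\hat s)=P_S(s)Q_{X|S}(x|s)P_{Y|X}(y|x)Q_{\widehat S|Y}(\hat s|y)$ for some kernels $Q_{X|S}$, $Q_{\widehat S|Y}$; $Q_X$, $Q_{S,\widehat S}$ denote marginals. For $a\in(0,\infty)^{\mathcal S\times\widehat{\mathcal S}}$ let $\bar a(\hat s)=\sum_{s'}a(\hat s|s')P_S(s')$ and $\Phi(a)=\sum_{s,\hat s}a(\hat s|s)P_S(s)f\big(\bar a(\hat s)/a(\hat s|s)\big)$. For $b\in\mathbb R^{\mathcal X}$ with $b_Y(y):=\sum_{x'}P_{Y|X}(y|x')b(x')>0$ for all $y$, let $\Psi(b)=\sum_{x,y}b(x)P_{Y|X}(y|x)f\big(b_Y(y)/P_{Y|X}(y|x)\big)$. (On kernels/pmfs these equal the $f$-mutual informations of $(s,\hat s)\mapsto a(\hat s|s)P_S(s)$ and $(x,y)\mapsto b(x)P_{Y|X}(y|x)$.) $f$-mutual information: for $f$ convex on $(0,\infty)$, $f'(\infty)=\lim_{t\to\infty}f(t)/t$, and for a joint pmf $p(u,v)$ on a finite product set, $I_f(p)=\sum_{u,v}\phi(u,v)$ with $\phi=p(u,v)f(p(u)p(v)/p(u,v))$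 if $p(u,v)>0$, $\phi=p(u)p(v)f'(\infty)$ if $p(u,v)=0<p(u)p(v)$, $\phi=0$ if $p(u)p(v)=0$. $f$ has the saddle property if $f$ is convex on $(0,\infty)$ and, for all finite sets $\mathcal U,\mathcal V$ and every kernel $p(v|u)$, $p_U\mapsto I_f(p_U(u)p(v|u))$ is concave on the pmfs on $\mathcal U$. *)

(* Defs.v *)
From HB Require Import structures.
From mathcomp Require Import all_boot.
From Stdlib Require Import Reals ClassicalEpsilon.

Set Implicit Arguments.
Unset Strict Implicit.
Unset Printing Implicit Defensive.

Local Open Scope R_scope.

Definition rsum (T : finType) (F : T -> R) : R := \big[Rplus/0]_(i : T) F i.

Definition is_pmf (A : finType) (p : A -> R) : Prop :=
  (forall a, 0 <= p a) /\ rsum p = 1.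

Definition is_kernel (A B : finType) (k : A -> B -> R) : Prop :=
  (forall a b, 0 <= k a b) /\ (forall a, rsum (fun b => k a b) = 1).

(* Extended reals (-oo excluded; only +oo is needed). *)
Inductive xR := Fin of R | PInf.

Definition xadd (x y : xR) : xR :=
  match x, y with Fin a, Fin b => Fin (a + b) | _, _ => PInf end.

(* scaling by a nonnegative real, convention 0 * (+oo) = 0 *)
Definition xscale (t : R) (x : xR) : xR :=
  match x with
  | Fin a => Fin (t * a)
  | PInf => if Req_EM_T t 0 then Fin 0 else PInf
  end.

Definition xle (x y : xR) : Prop :=
  match x, y with
  | Fin a, Fin b => a <= b
  | _, PInf => True
  | PInf, Fin _ => False
  end.

Definition xsum (T : finType) (F : T -> xR) : xR := \big[xadd/Fin 0]_(i : T) F i.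

Definition slope_inf (f : R -> R) (e : xR) : Prop :=
  match e with
  | Fin L => forall eps, 0 < eps -> exists M, forall t, M < t -> Rabs (f t / t - L) < eps
  | PInf => forall K, exists M, forall t, M < t -> K < f t / t
  end.

(* f'(oo) := lim_{t -> oo} f(t)/t  (exists in (-oo,+oo] for convex f) *)
Definition fprime_inf (f : R -> R) : xR :=
  epsilon (inhabits PInf) (fun e => slope_inf f e).

Definition convex_pos (f : R -> R) : Prop :=
  forall x y t, 0 < x -> 0 < y -> 0 <= t <= 1 ->
    f (t * x + (1 - t) * y) <= t * f x + (1 - t) * f y.

Definition If (f : R -> R) (U V : finType) (p : U -> V -> R) : xR :=
  let pU := fun u => rsum (fun v => p u v) in
  let pV := fun v => rsum (fun u => p u v) in
  xsum (fun u : U => xsum (fun v : V =>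
    if Rlt_dec 0 (p u v) then Fin (p u v * f (pU u * pV v / p u v))
    else if Rlt_dec 0 (pU u * pV v) then xscale (pU u * pV v) (fprime_inf f)
    else Fin 0)).

Definition saddle_property (f : R -> R) : Prop :=
  convex_pos f /\
  forall (U V : finType) (k : U -> V -> R), is_kernel k ->
    forall (p q : U -> R) (t : R), is_pmf p -> is_pmf q -> 0 <= t <= 1 ->
      xle (xadd (xscale t (If f (fun u v => p u * k u v)))
                (xscale (1 - t) (If f (fun u v => q u * k u v))))
          (If f (fun u v => (t * p u + (1 - t) * q u) * k u v)).

Definition C1_pos (f : R -> R) : Prop :=
  exists f' : R -> R, forall t, 0 < t -> derivable_pt_lim f t (f' t) /\ continuity_pt f' t.

Definition Qjoint (S X Y Sh : finType) (PS : S -> R) (W : X -> Y -> R)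
  (QXS : S -> X -> R) (QSY : Y -> Sh -> R) (s : S) (x : X) (y : Y) (sh : Sh) : R :=
  PS s * QXS s x * W x y * QSY y sh.

Definition Phi (f : R -> R) (S Sh : finType) (PS : S -> R) (a : S -> Sh -> R) : R :=
  let abar := fun sh => rsum (fun s' => a s' sh * PS s') in
  rsum (fun s => rsum (fun sh => a s sh * PS s * f (abar sh / a s sh))).

Definition Psi (f : R -> R) (X Y : finType) (W : X -> Y -> R) (b : X -> R) : R :=
  let bY := fun y => rsum (fun x' => W x' y * b x') in
  rsum (fun x => rsum (fun y => b x * W x y * f (bY y / W x y))).

Definition upd2 (A B : finType) (a : A -> B -> R) (i : A) (j : B) (t : R) : A -> B -> R :=
  fun i' j' => if (i' == i) && (j' == j) then t else a i' j'.

Definition upd1 (A : finType) (b : A -> R) (i : A) (t : R) : A -> R :=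
  fun i' => if i' == i then t else b i'.

(* Main.v *)
From HB Require Import structures.
Require Import Defs.
From mathcomp Require Import all_boot.
From Stdlib Require Import Reals Lra ClassicalEpsilon FunctionalExtensionality Classical.
Set Warnings "-notation-overridden,-redundant-canonical-projection".
Local Open Scope R_scope.

Lemma Rplus_assoc' : associative Rplus. Proof. move=> x y z; ring. Qed.
HB.instance Definition _ := Monoid.isComLaw.Build R 0 Rplus Rplus_assoc' Rplus_comm Rplus_0_l.

Section RS.
Context {T : finType}.
Implicit Types F G : T -> R.

Lemma rsum_ext {F G} : (forall i, F i = G i) -> rsum F = rsum G.
Proof. move=> H; rewrite /rsum; apply: eq_bigr => i _; exact: H. Qed.

Lemma rsumD F G : rsum (fun i => F i + G i) = rsum F + rsum G.
Proof. by rewrite /rsum big_split. Qed.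

Lemma rsum0 : rsum (fun _ : T => 0) = 0.
Proof. by rewrite /rsum big1. Qed.

Lemma rsumZ c F : rsum (fun i => c * F i) = c * rsum F.
Proof.
rewrite /rsum; apply: (big_rec2 (fun x y => x = c * y)); first by ring.
by move=> i y1 y2 _ ->; ring.
Qed.

Lemma rsumZr c F : rsum (fun i => F i * c) = rsum F * c.
Proof. rewrite Rmult_comm -rsumZ; apply: rsum_ext => i; ring. Qed.

Lemma rsumN F : rsum (fun i => - F i) = - rsum F.
Proof. have -> : - rsum F = (-1) * rsum F by ring. rewrite -rsumZ; apply: rsum_ext => i; ring. Qed.

Lemma rsumB F G : rsum (fun i => F i - G i) = rsum F - rsum G.
Proof. rewrite /Rminus -rsumN -rsumD; apply: rsum_ext => i; ring. Qed.

Lemma rsum_le {F G} : (forall i, F i <= G i) -> rsum F <= rsum G.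
Proof.
move=> H; rewrite /rsum; apply: (big_rec2 (fun x y => x <= y)); first lra.
move=> i y1 y2 _ h; have := H i; lra.
Qed.

Lemma rsum_ge0 {F} : (forall i, 0 <= F i) -> 0 <= rsum F.
Proof. move=> H; rewrite -rsum0; exact: rsum_le. Qed.

Lemma rsum_term F j : (forall i, 0 <= F i) -> F j <= rsum F.
Proof.
move=> H; rewrite /rsum (bigD1 j) //=.
have : 0 <= \big[Rplus/0]_(i | i != j) F i.
  apply: (big_rec (fun x => 0 <= x)); first lra.
  move=> i y _ h; have := H i; lra.
lra.
Qed.

Lemma rsum_eq0 {F} : (forall i, 0 <= F i) -> rsum F = 0 -> forall i, F i = 0.
Proof. move=> H E i; have := rsum_term F i H; have := H i; lra. Qed.

Lemma rsum_pos {F} j : (forall i, 0 <= F i) -> 0 < F j -> 0 < rsum F.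
Proof. move=> H h; have := rsum_term F j H; lra. Qed.

Lemma rsum_delta F (j : T) : rsum (fun i => (if i == j then 1 else 0) * F i) = F j.
Proof.
rewrite /rsum (bigD1 j) //= eqxx big1 /=; first ring.
by move=> i /negPf ->; ring.
Qed.

End RS.

Lemma rsum_exch (I J : finType) (F : I -> J -> R) :
  rsum (fun i => rsum (fun j => F i j)) = rsum (fun j => rsum (fun i => F i j)).
Proof. by rewrite /rsum exchange_big. Qed.

Lemma rsum_pair (I J : finType) (F : I -> J -> R) :
  rsum (fun i => rsum (fun j => F i j)) = rsum (fun p : I * J => F p.1 p.2).
Proof. by rewrite /rsum pair_big. Qed.



Lemma dext {g1 g2 : R -> R} {x l} :
  (forall t, g1 t = g2 t) -> derivable_pt_lim g1 x l -> derivable_pt_lim g2 x l.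
Proof. by move=> H; have -> : g1 = g2 by apply: functional_extensionality. Qed.

Lemma dleq {g : R -> R} {x l l'} : derivable_pt_lim g x l -> l = l' -> derivable_pt_lim g x l'.
Proof. by move=> H <-. Qed.

Lemma dsum (T : finType) (F : T -> R -> R) (D : T -> R) t :
  (forall i, derivable_pt_lim (F i) t (D i)) ->
  derivable_pt_lim (fun u => rsum (fun i => F i u)) t (rsum D).
Proof.
move=> H; rewrite /rsum; elim: (index_enum T) => [|x r IH].
  apply: (dext (g1 := fun _ => 0)); first by move=> u; rewrite big_nil.
  rewrite big_nil; exact: derivable_pt_lim_const.
apply: (dext (g1 := fun u => F x u + \big[Rplus/0]_(i <- r) F i u)).
  by move=> u; rewrite big_cons.
rewrite big_cons; exact: (derivable_pt_lim_plus _ _ _ _ _ (H x) IH).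
Qed.

Lemma dmul {f1 f2 : R -> R} {x l1 l2} :
  derivable_pt_lim f1 x l1 -> derivable_pt_lim f2 x l2 ->
  derivable_pt_lim (fun t => f1 t * f2 t) x (l1 * f2 x + f1 x * l2).
Proof. exact: derivable_pt_lim_mult. Qed.

Lemma dcomp {g f0 : R -> R} {x l1 l2} :
  derivable_pt_lim g x l1 -> derivable_pt_lim f0 (g x) l2 ->
  derivable_pt_lim (fun t => f0 (g t)) x (l2 * l1).
Proof. exact: derivable_pt_lim_comp. Qed.

Lemma ddiv {f1 f2 : R -> R} {x l1 l2} :
  derivable_pt_lim f1 x l1 -> derivable_pt_lim f2 x l2 -> f2 x <> 0 ->
  derivable_pt_lim (fun t => f1 t / f2 t) x ((l1 * f2 x - l2 * f1 x) / (f2 x)²).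
Proof. exact: derivable_pt_lim_div. Qed.

Lemma dconst c x : derivable_pt_lim (fun _ => c) x 0.
Proof. exact: derivable_pt_lim_const. Qed.

Lemma dlin c e t0 : derivable_pt_lim (fun t => c + (t - t0) * e) t0 e.
Proof.
apply: (dleq (l := 0 + ((1 - 0) * e + (t0 - t0) * 0))); last by ring.
apply: (derivable_pt_lim_plus (fun _ => c)); first exact: derivable_pt_lim_const.
apply: (dmul (f1 := fun t => t - t0) (f2 := fun _ => e)); last exact: derivable_pt_lim_const.
apply: (derivable_pt_lim_minus id (fun _ => t0)); [exact: derivable_pt_lim_id | exact: derivable_pt_lim_const].
Qed.

Lemma deriv_le {g : R -> R} {l K} :
  derivable_pt_lim g 0 l -> (forall h, 0 < h <= 1 -> g h - g 0 <= h * K) -> l <= K.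
Proof.
move=> D H; apply: Rnot_lt_le => hlt.
have [delta Hd] := D (l - K) ltac:(lra).
set h := Rmin (delta / 2) 1.
have hpos : 0 < h by apply: Rmin_pos; [have := cond_pos delta; lra | lra].
have hle1 : h <= 1 by apply: Rmin_r.
have hled : h <= delta / 2 by apply: Rmin_l.
have := Hd h ltac:(lra).
rewrite Rplus_0_l Rabs_pos_eq; last lra.
move=> /(_ ltac:(have := cond_pos delta; lra)).
have := H h (conj hpos hle1).
set q := (g h - g 0) / h.
have -> : g h - g 0 = q * h by rewrite /q; field; lra.
move=> Hq; have : q <= K by nra.
move=> Hq2 Ha; have : l - q <= Rabs (q - l) by have := Rabs_Ropp (q - l); have := Rle_abs (-(q-l)); lra.
lra.
Qed.

Lemma deriv_ge {g : R -> R} {l K} :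
  derivable_pt_lim g 0 l -> (forall h, 0 < h <= 1 -> h * K <= g h - g 0) -> K <= l.
Proof.
move=> D H.
suff : - l <= - K by lra.
apply: (deriv_le (g := fun h => - g h)).
  exact: (derivable_pt_lim_opp g).
move=> h hh; have := H h hh; lra.
Qed.

Lemma tangent (f : R -> R) x y l :
  convex_pos f -> derivable_pt_lim f x l -> 0 < x -> 0 < y -> f x + l * (y - x) <= f y.
Proof.
move=> Hc D hx hy.
suff : l * (y - x) <= f y - f x by lra.
apply: (deriv_le (g := fun h => f (x + (h - 0) * (y - x)))).
  apply: (dleq (l := l * (y - x))); last by [].
  apply: (dcomp (g := fun h => x + (h - 0) * (y - x))); first exact: dlin.
  by rewrite Rminus_diag Rmult_0_l Rplus_0_r.
move=> h hh.
rewrite Rminus_diag Rmult_0_l Rplus_0_r Rminus_0_r.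
have -> : x + h * (y - x) = h * y + (1 - h) * x by ring.
have := Hc y x h hy hx ltac:(lra); lra.
Qed.

Lemma pers2 {f : R -> R} {C1 C2 M1 M2} :
  convex_pos f -> 0 <= C1 -> 0 <= C2 ->
  (C1 = 0 -> M1 = 0) -> (0 < C1 -> 0 < M1) ->
  (C2 = 0 -> M2 = 0) -> (0 < C2 -> 0 < M2) ->
  (C1 + C2) * f ((M1 + M2) / (C1 + C2)) <= C1 * f (M1 / C1) + C2 * f (M2 / C2).
Proof.
move=> Hc h1 h2 e1 p1 e2 p2.
case: (Req_dec C1 0) => [E1|N1].
  rewrite E1 (e1 E1) !Rplus_0_l Rmult_0_l Rplus_0_l; lra.
case: (Req_dec C2 0) => [E2|N2].
  rewrite E2 (e2 E2) !Rplus_0_r Rmult_0_l Rplus_0_r; lra.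
have q1 : 0 < C1 by lra.
have q2 : 0 < C2 by lra.
have m1 := p1 q1; have m2 := p2 q2.
set t := C1 / (C1 + C2).
have ht : 0 <= t <= 1.
  have tp : 0 < t by apply: Rdiv_lt_0_compat; lra.
  have te : t * (C1 + C2) = C1 by rewrite /t; field; lra.
  split; nra.
have Hx : 0 < M1 / C1 by apply: Rdiv_lt_0_compat.
have Hy : 0 < M2 / C2 by apply: Rdiv_lt_0_compat.
have := Hc (M1 / C1) (M2 / C2) t Hx Hy ht.
have -> : t * (M1 / C1) + (1 - t) * (M2 / C2) = (M1 + M2) / (C1 + C2)
  by rewrite /t; field; lra.
move=> H.
have E : C1 * f (M1 / C1) + C2 * f (M2 / C2) =
   (C1 + C2) * (t * f (M1 / C1) + (1 - t) * f (M2 / C2)) by rewrite /t; field; lra.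
rewrite E; apply: Rmult_le_compat_l; lra.
Qed.

Lemma jensen (f : R -> R) (T : finType) (c z : T -> R) :
  convex_pos f -> (forall i, 0 <= c i) -> (forall i, 0 < z i) ->
  rsum c * f (rsum (fun i => c i * z i) / rsum c) <= rsum (fun i => c i * f (z i)).
Proof.
move=> Hc hc hz; rewrite /rsum.
suff : forall r : seq T,
  let C := \big[Rplus/0]_(i <- r) c i in
  let M := \big[Rplus/0]_(i <- r) (c i * z i) in
  let V := \big[Rplus/0]_(i <- r) (c i * f (z i)) in
  0 <= C /\ (C = 0 -> M = 0) /\ (0 < C -> 0 < M) /\ C * f (M / C) <= V.
  by move=> /(_ (index_enum T)) /= [_ [_ [_ H]]].
elim=> [|i r IH] /=.
  rewrite !big_nil; split; first lra; split; first by []; split; first lra.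
  rewrite Rmult_0_l; lra.
move: IH => [C0 [CM [CP IH]]].
rewrite !big_cons.
set C := \big[Rplus/0]_(j <- r) c j in C0 CM CP IH *.
set M := \big[Rplus/0]_(j <- r) (c j * z j) in CM CP IH *.
set V := \big[Rplus/0]_(j <- r) (c j * f (z j)) in IH *.
have hi := hc i; have zi := hz i.
split; first lra.
split.
  move=> E; have ci0 : c i = 0 by lra.
  have C00 : C = 0 by lra.
  rewrite ci0 (CM C00); ring.
split.
  move=> P; case: (Req_dec C 0) => [E|N].
    rewrite (CM E) Rplus_0_r; have : 0 < c i by lra. nra.
  have := CP ltac:(lra); nra.
apply: Rle_trans (pers2 Hc hi C0 _ _ CM CP) _.
- move=> ->; ring.
- move=> h; nra.
have : c i * f (c i * z i / c i) = c i * f (z i).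
  case: (Req_dec (c i) 0) => [->|N]; first ring.
  by congr (_ * f _); field.
lra.
Qed.



Definition rpath {A : Type} (b : A -> R) (d : A -> R) (t0 t : R) : A -> R :=
  fun i => b i + (t - t0) * d i.

Lemma rpath0 {A : Type} (b d : A -> R) t0 : rpath b d t0 t0 = b.
Proof. apply: functional_extensionality => i; rewrite /rpath; ring. Qed.

Definition rpath2 {A B : Type} (a : A -> B -> R) (d : A -> B -> R) (t0 t : R) : A -> B -> R :=
  fun i j => a i j + (t - t0) * d i j.

Lemma rpath20 {A B : Type} (a d : A -> B -> R) t0 : rpath2 a d t0 t0 = a.
Proof.
apply: functional_extensionality => i; apply: functional_extensionality => j.
rewrite /rpath2; ring.
Qed.

Section PsiD.
Context {X Y : finType} (W : X -> Y -> R) (hWpos : forall x y, 0 < W x y)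
  (f f' : R -> R) (Hf' : forall t, 0 < t -> derivable_pt_lim f t (f' t)).

Definition bY (b : X -> R) y := rsum (fun x' => W x' y * b x').
Definition Lp (b : X -> R) y := rsum (fun x' => b x' * f' (bY b y / W x' y)).
Definition cPsi (b : X -> R) x := rsum (fun y => W x y * f (bY b y / W x y) + W x y * Lp b y).

Lemma LPsi (b d : X -> R) t0 : (forall y, 0 < bY b y) ->
  derivable_pt_lim (fun t => Psi f W (rpath b d t0 t)) t0 (rsum (fun x => d x * cPsi b x)).
Proof.
move=> hb.
apply: (dext (g1 := fun t => rsum (fun x => rsum (fun y =>
   rpath b d t0 t x * W x y * f (bY (rpath b d t0 t) y / W x y))))); first by [].
apply: dleq.
  apply: dsum => x; apply: dsum => y.
  apply: dmul.
    apply: dmul; first exact: dlin.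
    exact: dconst.
  apply: dcomp.
    apply: ddiv; last exact: (Rgt_not_eq _ _ (hWpos x y)).
      rewrite /bY; apply: dsum => x'.
      apply: dmul; first exact: dconst.
      exact: dlin.
    exact: dconst.
  cbv beta; rewrite rpath0; apply: Hf'.
  apply: Rdiv_lt_0_compat; [exact: hb | exact: hWpos].
cbv beta; rewrite rpath0.
pose DY y := rsum (fun x' => W x' y * d x').
have E1 : forall x y, (d x * W x y + b x * 0) * f (bY b y / W x y) +
        b x * W x y *
        (f' (bY b y / W x y) *
         ((rsum (fun x' : X => 0 * b x' + W x' y * d x') * W x y -
           0 * bY b y) / (W x y)²)) =
    d x * (W x y * f (bY b y / W x y)) + b x * f' (bY b y / W x y) * DY y.
  move=> x y; rewrite (@rsum_ext _ _ (fun x' => W x' y * d x')); last by move=> i; ring.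
  rewrite /DY /Rsqr; have := hWpos x y; move=> hw; field; lra.
rewrite (rsum_ext (fun x => rsum_ext (E1 x))).
rewrite (rsum_ext (fun x => rsumD _ _)) rsumD.
have E2 : rsum (fun x => rsum (fun y => b x * f' (bY b y / W x y) * DY y)) =
          rsum (fun x => d x * rsum (fun y => W x y * Lp b y)).
  rewrite rsum_exch.
  rewrite (rsum_ext (G := fun y => Lp b y * DY y)); last first.
    by move=> y; rewrite /Lp -rsumZr.
  rewrite (rsum_ext (G := fun y => rsum (fun x => Lp b y * W x y * d x))); last first.
    by move=> y; rewrite /DY -rsumZ; apply: rsum_ext => x; ring.
  rewrite rsum_exch; apply: rsum_ext => x; rewrite -rsumZ; apply: rsum_ext => y; ring.
rewrite E2 -rsumD; apply: rsum_ext => x.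
rewrite /cPsi rsumD rsumZ; ring.
Qed.
End PsiD.

Section PhiD.
Context {S Sh : finType} (PS : S -> R) (hPSpos : forall s, 0 < PS s)
  (f f' : R -> R) (Hf' : forall t, 0 < t -> derivable_pt_lim f t (f' t)).

Definition abar (a : S -> Sh -> R) sh := rsum (fun s' => a s' sh * PS s').
Definition rr (a : S -> Sh -> R) s sh := abar a sh / a s sh.
Definition Kf (a : S -> Sh -> R) sh := rsum (fun s'' => PS s'' * f' (rr a s'' sh)).
Definition cPhi (a : S -> Sh -> R) s sh :=
  PS s * (f (rr a s sh) - rr a s sh * f' (rr a s sh)) + PS s * Kf a sh.

Lemma Phi_lin (a e : S -> Sh -> R) :
  rsum (fun s => rsum (fun sh => e s sh * cPhi a s sh)) =
  rsum (fun s => rsum (fun sh => PS s * (e s sh * (f (rr a s sh) - rr a s sh * f' (rr a s sh))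
        + f' (rr a s sh) * abar e sh))).
Proof.
have E : forall s sh, e s sh * cPhi a s sh =
   PS s * (e s sh * (f (rr a s sh) - rr a s sh * f' (rr a s sh))) + e s sh * PS s * Kf a sh.
  by move=> s sh; rewrite /cPhi; ring.
have E' : forall s sh, PS s * (e s sh * (f (rr a s sh) - rr a s sh * f' (rr a s sh))
        + f' (rr a s sh) * abar e sh) =
   PS s * (e s sh * (f (rr a s sh) - rr a s sh * f' (rr a s sh))) + PS s * f' (rr a s sh) * abar e sh.
  by move=> s sh; ring.
rewrite (rsum_ext (fun s => rsum_ext (E s))) (rsum_ext (fun s => rsum_ext (E' s))).
rewrite (rsum_ext (fun s => rsumD _ _)) rsumD.
rewrite [in RHS](rsum_ext (fun s => rsumD _ _)) [in RHS]rsumD.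
congr (_ + _).
rewrite rsum_exch [in RHS]rsum_exch; apply: rsum_ext => sh.
rewrite rsumZr [in RHS]rsumZr /abar /Kf; ring.
Qed.

Lemma LPhi (a d : S -> Sh -> R) t0 : (forall s sh, 0 < a s sh) ->
  derivable_pt_lim (fun t => Phi f PS (rpath2 a d t0 t)) t0
     (rsum (fun s => rsum (fun sh => d s sh * cPhi a s sh))).
Proof.
move=> ha.
apply: (dext (g1 := fun t => rsum (fun s => rsum (fun sh =>
   rpath2 a d t0 t s sh * PS s * f (abar (rpath2 a d t0 t) sh / rpath2 a d t0 t s sh))))); first by [].
apply: dleq.
  apply: dsum => s; apply: dsum => sh.
  apply: dmul.
    apply: dmul; first exact: dlin.
    exact: dconst.
  apply: dcomp.
    apply: ddiv.
        rewrite /abar; apply: dsum => s'.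
        apply: dmul; first exact: dlin.
        exact: dconst.
      exact: dlin.
    rewrite rpath20; exact: (Rgt_not_eq _ _ (ha s sh)).
  cbv beta; rewrite rpath20; apply: Hf'.
  apply: Rdiv_lt_0_compat; last exact: ha.
  apply: (rsum_pos s); first by move=> i; have := ha i sh; have := hPSpos i; nra.
  have := ha s sh; have := hPSpos s; nra.
cbv beta; rewrite rpath20 Phi_lin.
apply: rsum_ext => s; apply: rsum_ext => sh.
rewrite (@rsum_ext _ _ (fun s' => d s' sh * PS s')); last by move=> i; ring.
rewrite /rr /Rsqr -/(abar d sh).
have := ha s sh; move=> h; field; lra.
Qed.
End PhiD.



Lemma xsum_fin (T : finType) (F : T -> R) : xsum (fun i => Fin (F i)) = Fin (rsum F).
Proof.
rewrite /xsum /rsum; apply/esym.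
by rewrite (big_morph Fin (id1 := Fin 0) (op1 := xadd) (id2 := 0) (op2 := Rplus)).
Qed.

Lemma xsum_ext (T : finType) (F G : T -> xR) : (forall i, F i = G i) -> xsum F = xsum G.
Proof. move=> H; rewrite /xsum; apply: eq_bigr => i _; exact: H. Qed.

Lemma pmf_exists_pos {T : finType} {p : T -> R} : (forall i, 0 <= p i) -> rsum p = 1 ->
  exists i, 0 < p i.
Proof.
move=> h1 h2; apply: NNPP => N.
have : rsum p = 0.
  rewrite -(@rsum0 T); apply: rsum_ext => i.
  have := h1 i; case: (Rle_lt_or_eq_dec _ _ (h1 i)) => [h|h]; last by move=> _; rewrite h.
  by exfalso; apply: N; exists i.
lra.
Qed.

Section Model.
Context {S X Y Sh : finType} (PS : S -> R) (W : X -> Y -> R)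
  (hPS : is_pmf PS) (hW : is_kernel W)
  (hPSpos : forall s, 0 < PS s) (hWpos : forall x y, 0 < W x y)
  (f f' : R -> R) (Hf' : forall t, 0 < t -> derivable_pt_lim f t (f' t)).

Lemma IfE (p : X -> R) : is_pmf p -> If f (fun u v => p u * W u v) = Fin (Psi f W p).
Proof.
move=> [p0 p1].
rewrite /If /Psi -xsum_fin; apply: xsum_ext => u; rewrite -xsum_fin; apply: xsum_ext => v.
have pU : rsum (fun v0 => p u * W u v0) = p u by rewrite rsumZ hW.2; ring.
rewrite pU.
have pV : rsum (fun u0 => p u0 * W u0 v) = rsum (fun x' => W x' v * p x').
  by apply: rsum_ext => i; ring.
rewrite pV.
set B := rsum (fun x' => W x' v * p x').
have hw := hWpos u v.
case: (Rlt_dec 0 (p u * W u v)) => h.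
  have hp : 0 < p u by nra.
  congr Fin; congr (_ * f _); field; lra.
have hp : p u = 0 by have := p0 u; nra.
case: (Rlt_dec 0 (p u * B)) => h2; first by (exfalso; rewrite hp in h2; lra).
rewrite /=; rewrite hp; congr Fin; ring.
Qed.

Lemma bY_pos (b : X -> R) : is_pmf b -> forall y, 0 < bY W b y.
Proof.
move=> [b0 b1] y; have [x hx] := pmf_exists_pos b0 b1.
apply: (rsum_pos x); first by move=> i; have := b0 i; have := hWpos i y; nra.
have := hWpos x y; nra.
Qed.

Section Q.
Context (QXS : S -> X -> R) (QSY : Y -> Sh -> R) (kXS : is_kernel QXS) (kSY : is_kernel QSY).

Definition aQ s sh := rsum (fun x => rsum (fun y => Qjoint PS W QXS QSY s x y sh)) / PS s.
Definition bQ x := rsum (fun s => rsum (fun y => rsum (fun sh => Qjoint PS W QXS QSY s x y sh))).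

Lemma Qj_ge0 s x y sh : 0 <= Qjoint PS W QXS QSY s x y sh.
Proof.
rewrite /Qjoint; have := hPSpos s; have := hWpos x y; have := kXS.1 s x; have := kSY.1 y sh.
move=> h1 h2 h3 h4; apply: Rmult_le_pos; last lra.
apply: Rmult_le_pos; last lra. apply: Rmult_le_pos; lra.
Qed.

Lemma bQ_eq x : bQ x = rsum (fun s => PS s * QXS s x).
Proof.
apply: rsum_ext => s.
rewrite (rsum_ext (G := fun y => PS s * QXS s x * W x y)); last first.
  by move=> y; rewrite /Qjoint rsumZ kSY.2; ring.
by rewrite rsumZ hW.2; ring.
Qed.

Lemma bQ_pmf : is_pmf bQ.
Proof.
split.
  move=> x; rewrite bQ_eq; apply: rsum_ge0 => s.
  have := hPSpos s; have := kXS.1 s x; nra.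
rewrite (rsum_ext bQ_eq) rsum_exch -hPS.2; apply: rsum_ext => s.
by rewrite rsumZ kXS.2; ring.
Qed.

Lemma aQ_PS s sh : aQ s sh * PS s = rsum (fun x => rsum (fun y => Qjoint PS W QXS QSY s x y sh)).
Proof. rewrite /aQ; have := hPSpos s; move=> h; field; lra. Qed.

Lemma aQ_ge0 s sh : 0 <= aQ s sh.
Proof.
rewrite /aQ; apply: Rmult_le_pos; last by apply: Rlt_le; apply: Rinv_0_lt_compat.
apply: rsum_ge0 => x; apply: rsum_ge0 => y; exact: Qj_ge0.
Qed.

Lemma aQ_sum s : rsum (fun sh => aQ s sh) = 1.
Proof.
rewrite /aQ rsumZr.
have -> : rsum (fun sh => rsum (fun x => rsum (fun y => Qjoint PS W QXS QSY s x y sh))) = PS s.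
  rewrite rsum_exch.
  rewrite (rsum_ext (G := fun x => rsum (fun y => PS s * QXS s x * W x y))); last first.
    move=> x; rewrite rsum_exch; apply: rsum_ext => y.
    by rewrite /Qjoint rsumZ kSY.2; ring.
  rewrite (rsum_ext (G := fun x => PS s * QXS s x)); last by move=> x; rewrite rsumZ hW.2; ring.
  by rewrite rsumZ kXS.2; ring.
have := hPSpos s; move=> h; field; lra.
Qed.

Lemma abar_aQ sh : abar PS aQ sh = rsum (fun y => bY W bQ y * QSY y sh).
Proof.
rewrite /abar (rsum_ext (fun s' => aQ_PS s' sh)).
rewrite rsum_exch.
rewrite (rsum_ext (G := fun x => rsum (fun y => rsum (fun s' => Qjoint PS W QXS QSY s' x y sh)))); last first.
  by move=> x; rewrite rsum_exch.
rewrite rsum_exch; apply: rsum_ext => y.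
rewrite /bY -rsumZr; apply: rsum_ext => x.
rewrite bQ_eq -rsumZ -rsumZr; apply: rsum_ext => s.
rewrite /Qjoint; ring.
Qed.

Lemma aQ_zero s sh : aQ s sh = 0 -> abar PS aQ sh = 0.
Proof.
move=> E.
have E2 : rsum (fun x => rsum (fun y => Qjoint PS W QXS QSY s x y sh)) = 0.
  by rewrite -aQ_PS E; ring.
have H1 := rsum_eq0 (fun x => rsum_ge0 (fun y => Qj_ge0 s x y sh)) E2.
have H2 : forall x y, Qjoint PS W QXS QSY s x y sh = 0.
  by move=> x; apply: rsum_eq0 => [y|]; [exact: Qj_ge0 | exact: H1].
have [x hx] := pmf_exists_pos (kXS.1 s) (kXS.2 s).
have H3 : forall y, QSY y sh = 0.
  move=> y; have := H2 x y; rewrite /Qjoint.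
  have := hPSpos s; have := hWpos x y; move=> h1 h2 h.
  have hp : 0 < PS s * QXS s x * W x y by apply: Rmult_lt_0_compat; [apply: Rmult_lt_0_compat|]; lra.
  case: (Rmult_integral _ _ h) => //; lra.
rewrite abar_aQ -(@rsum0 Y); apply: rsum_ext => y; rewrite H3; ring.
Qed.

Lemma obj_eq (delta : S -> Sh -> R) (rho : X -> R) :
  rsum (fun s => rsum (fun x => rsum (fun y => rsum (fun sh =>
        Qjoint PS W QXS QSY s x y sh * (delta s sh + rho x))))) =
  rsum (fun s => rsum (fun sh => aQ s sh * PS s * delta s sh)) + rsum (fun x => bQ x * rho x).
Proof.
rewrite (rsum_ext (G := fun s => rsum (fun x => rsum (fun y => rsum (fun sh =>
        Qjoint PS W QXS QSY s x y sh * delta s sh))) +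
        rsum (fun x => rsum (fun y => rsum (fun sh =>
        Qjoint PS W QXS QSY s x y sh * rho x))))); last first.
  move=> s; rewrite -rsumD; apply: rsum_ext => x.
  rewrite -rsumD; apply: rsum_ext => y.
  rewrite -rsumD; apply: rsum_ext => sh; ring.
rewrite rsumD; congr (_ + _).
  apply: rsum_ext => s.
  rewrite (rsum_ext (G := fun x => rsum (fun sh => rsum (fun y =>
        Qjoint PS W QXS QSY s x y sh * delta s sh)))); last by move=> x; rewrite rsum_exch.
  rewrite rsum_exch; apply: rsum_ext => sh.
  rewrite aQ_PS -rsumZr; apply: rsum_ext => x; rewrite -rsumZr; apply: rsum_ext => y; ring.
rewrite rsum_exch; apply: rsum_ext => x.
rewrite /bQ -rsumZr; apply: rsum_ext => s; rewrite -rsumZr; apply: rsum_ext => y.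
rewrite -rsumZr; apply: rsum_ext => sh; ring.
Qed.

End Q.

Context (hconv : convex_pos f) (hsad : saddle_property f).

Lemma Psi_eq (b : X -> R) : Psi f W b = rsum (fun x => rsum (fun y => b x * W x y * f (bY W b y / W x y))).
Proof. by []. Qed.

Lemma Phi_eq (a : S -> Sh -> R) : Phi f PS a = rsum (fun s => rsum (fun sh => a s sh * PS s * f (abar PS a sh / a s sh))).
Proof. by []. Qed.

Lemma partA (b b' : X -> R) : is_pmf b -> is_pmf b' ->
  Psi f W b' - Psi f W b <= rsum (fun x => (b' x - b x) * cPsi W f f' b x).
Proof.
move=> pb pb'.
apply: (deriv_ge (g := fun h => Psi f W (rpath b (fun x => b' x - b x) 0 h))).
  apply: LPsi => //; exact: bY_pos pb.
move=> h hh; rewrite rpath0.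
have E : rpath b (fun x => b' x - b x) 0 h = (fun u => h * b' u + (1 - h) * b u).
  by apply: functional_extensionality => u; rewrite /rpath; ring.
rewrite E.
have pm : is_pmf (fun u => h * b' u + (1 - h) * b u).
  split.
    move=> u; have := pb.1 u; have := pb'.1 u; nra.
  by rewrite rsumD rsumZ rsumZ pb.2 pb'.2; ring.
have := hsad.2 X Y W hW b' b h pb' pb ltac:(lra).
have e1 := IfE _ pb'; have e2 := IfE _ pb; have e3 := IfE _ pm.
rewrite e1 e2 e3 /=; lra.
Qed.

Lemma termB (A A' B B' P : R) : convex_pos f -> (forall t, 0 < t -> derivable_pt_lim f t (f' t)) ->
  0 < A -> 0 < P -> 0 < B -> 0 <= A' -> (0 < A' -> A' * P <= B') -> (A' = 0 -> B' = 0) ->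
  P * ((A' - A) * (f (B / A) - B / A * f' (B / A)) + f' (B / A) * (B' - B))
  <= A' * P * f (B' / A') - A * P * f (B / A).
Proof.
move=> hc hd hA hP hB hA' h1 h2.
have hr : 0 < B / A by apply: Rdiv_lt_0_compat.
case: (Rle_lt_or_eq_dec _ _ hA') => hA'0.
  have hB' := h1 hA'0.
  have hy : 0 < B' / A' by apply: Rdiv_lt_0_compat; nra.
  have T := tangent f (B / A) (B' / A') (f' (B / A)) hc (hd _ hr) hr hy.
  have E : P * ((A' - A) * (f (B / A) - B / A * f' (B / A)) + f' (B / A) * (B' - B))
             - (A' * P * f (B' / A') - A * P * f (B / A))
         = A' * P * (f (B / A) + f' (B / A) * (B' / A' - B / A) - f (B' / A')).
    by field; lra.
  have : A' * P * (f (B / A) + f' (B / A) * (B' / A' - B / A) - f (B' / A')) <= 0.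
    have : 0 <= A' * P by nra.
    move=> h0; have : f (B / A) + f' (B / A) * (B' / A' - B / A) - f (B' / A') <= 0 by lra.
    nra.
  lra.
have EB' : B' = 0 by apply: h2.
rewrite -hA'0 EB'.
have E : P * ((0 - A) * (f (B / A) - B / A * f' (B / A)) + f' (B / A) * (0 - B)) = - (A * P * f (B / A)).
  by field; lra.
rewrite E; lra.
Qed.

Lemma partB (QXS : S -> X -> R) (QSY : Y -> Sh -> R) (QXS' : S -> X -> R) (QSY' : Y -> Sh -> R) :
  is_kernel QXS -> is_kernel QSY -> is_kernel QXS' -> is_kernel QSY' ->
  (forall s sh, 0 < aQ QXS QSY s sh) ->
  rsum (fun s => rsum (fun sh => (aQ QXS' QSY' s sh - aQ QXS QSY s sh) * cPhi PS f f' (aQ QXS QSY) s sh))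
  <= Phi f PS (aQ QXS' QSY') - Phi f PS (aQ QXS QSY).
Proof.
move=> k1 k2 k3 k4 hapos.
set a := aQ QXS QSY; set a' := aQ QXS' QSY'.
rewrite (Phi_lin PS f f' a (fun s sh => a' s sh - a s sh)).
rewrite !Phi_eq -rsumB; apply: rsum_le => s; rewrite -rsumB; apply: rsum_le => sh.
have Eb : abar PS (fun s sh => a' s sh - a s sh) sh = abar PS a' sh - abar PS a sh.
  by rewrite /abar -rsumB; apply: rsum_ext => i; ring.
rewrite Eb /rr.
have hA : 0 < a s sh := hapos s sh. have hP := hPSpos s.
have hA' : 0 <= a' s sh by exact: (aQ_ge0 _ _ k3 k4).
have hB : 0 < abar PS a sh.
  apply: (rsum_pos s); first by move=> i /=; have := hapos i sh; rewrite -/a; have := hPSpos i; nra.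
  nra.
have hB'1 : 0 < a' s sh -> a' s sh * PS s <= abar PS a' sh.
  move=> _; rewrite /abar.
  apply: (rsum_term (fun s' => a' s' sh * PS s') s).
  by move=> i; have := aQ_ge0 _ _ k3 k4 i sh; have := hPSpos i; rewrite -/a'; nra.
have hB'2 : a' s sh = 0 -> abar PS a' sh = 0 by move=> e; apply: (aQ_zero _ _ k3 k4); exact: e.
exact: (termB _ _ _ _ _ hconv Hf' hA hP hB hA' hB'1 hB'2).
Qed.

Lemma partC (QXS' : S -> X -> R) (QSY' : Y -> Sh -> R) :
  is_kernel QXS' -> is_kernel QSY' ->
  Phi f PS (aQ QXS' QSY') <= Psi f W (bQ QXS' QSY').
Proof.
move=> k3 k4.
set a' := aQ QXS' QSY'; set b' := bQ QXS' QSY'.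
have pb' : is_pmf b' by exact: (bQ_pmf _ _ k3 k4).
have hbY := bY_pos _ pb'.
pose G s sh x y := Qjoint PS W QXS' QSY' s x y sh * f (bY W b' y / W x y).
apply: (Rle_trans _ (rsum (fun s => rsum (fun sh => rsum (fun x => rsum (fun y => G s sh x y)))))).
  rewrite Phi_eq; apply: rsum_le => s; apply: rsum_le => sh.
  rewrite rsum_pair.
  have J := @jensen f _ (fun p : X * Y => Qjoint PS W QXS' QSY' s p.1 p.2 sh)
            (fun p : X * Y => bY W b' p.2 / W p.1 p.2) hconv
            (fun p => Qj_ge0 _ _ k3 k4 s p.1 p.2 sh)
            (fun p => Rdiv_lt_0_compat _ _ (hbY p.2) (hWpos p.1 p.2)).
  have Ec : rsum (fun p : X * Y => Qjoint PS W QXS' QSY' s p.1 p.2 sh) = a' s sh * PS s.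
    by rewrite -(@rsum_pair X Y (fun x y => Qjoint PS W QXS' QSY' s x y sh)) aQ_PS.
  have Ecz : rsum (fun p : X * Y => Qjoint PS W QXS' QSY' s p.1 p.2 sh * (bY W b' p.2 / W p.1 p.2))
           = PS s * abar PS a' sh.
    rewrite -(@rsum_pair X Y (fun x y => Qjoint PS W QXS' QSY' s x y sh * (bY W b' y / W x y))).
    rewrite (abar_aQ _ _ k4).
    rewrite (rsum_ext (G := fun x => PS s * QXS' s x * rsum (fun y => bY W b' y * QSY' y sh))); last first.
      move=> x; rewrite -rsumZ; apply: rsum_ext => y.
      rewrite /Qjoint; have := hWpos x y; move=> hw; field; lra.
    by rewrite rsumZr rsumZ k3.2 /b' Rmult_1_r.
  rewrite Ec Ecz in J.
  apply: Rle_trans _ J.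
  have hP := hPSpos s.
  case: (Req_dec (a' s sh) 0) => h0.
    rewrite h0; lra.
  have -> : PS s * abar PS a' sh / (a' s sh * PS s) = abar PS a' sh / a' s sh by field; lra.
  lra.
rewrite Psi_eq.
rewrite (rsum_ext (G := fun s => rsum (fun x => rsum (fun y => rsum (fun sh => G s sh x y))))); last first.
  move=> s; rewrite rsum_exch; apply: rsum_ext => x; exact: rsum_exch.
apply: Req_le; rewrite rsum_exch; apply: rsum_ext => x.
rewrite rsum_exch; apply: rsum_ext => y.
rewrite /b' (bQ_eq _ _ k4) -!rsumZr; apply: rsum_ext => s.
rewrite /G /Qjoint.
rewrite (rsum_ext (G := fun sh => (PS s * QXS' s x * W x y * f (bY W (bQ QXS' QSY') y / W x y)) * QSY' y sh)); last by move=> sh; rewrite /b'; ring.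
by rewrite rsumZ k4.2 Rmult_1_r.
Qed.

End Model.



Lemma psi_match {X Y : finType} (W : X -> Y -> R) (hWpos : forall x y, 0 < W x y)
  (f f' : R -> R) (Hf' : forall t, 0 < t -> derivable_pt_lim f t (f' t))
  (b : X -> R) (hb : forall y, 0 < bY W b y) (x : X) l :
  derivable_pt_lim (fun t => Psi f W (upd1 b x t)) (b x) l -> l = cPsi W f f' b x.
Proof.
move=> D.
pose e := fun i : X => if i == x then 1 else 0.
have D2 := LPsi W hWpos f f' Hf' b e (b x) hb.
have E : (fun t => Psi f W (rpath b e (b x) t)) = (fun t => Psi f W (upd1 b x t)).
  apply: functional_extensionality => t; congr Psi.
  apply: functional_extensionality => i; rewrite /rpath /upd1 /e.
  by case: eqP => [->|_]; ring.
rewrite E in D2.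
rewrite (uniqueness_limite _ _ _ _ D D2).
exact: rsum_delta.
Qed.

Lemma phi_match {S Sh : finType} (PS : S -> R) (hPSpos : forall s, 0 < PS s)
  (f f' : R -> R) (Hf' : forall t, 0 < t -> derivable_pt_lim f t (f' t))
  (a : S -> Sh -> R) (ha : forall s sh, 0 < a s sh) s sh l :
  derivable_pt_lim (fun t => Phi f PS (upd2 a s sh t)) (a s sh) l -> l = cPhi PS f f' a s sh.
Proof.
move=> D.
pose e := fun (i : S) (j : Sh) => (if i == s then 1 else 0) * (if j == sh then 1 else 0).
have D2 := LPhi PS hPSpos f f' Hf' a e (a s sh) ha.
have E : (fun t => Phi f PS (rpath2 a e (a s sh) t)) = (fun t => Phi f PS (upd2 a s sh t)).
  apply: functional_extensionality => t; congr Phi.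
  apply: functional_extensionality => i; apply: functional_extensionality => j.
  rewrite /rpath2 /upd2 /e.
  by case: eqP => [->|_]; case: eqP => [->|_] /=; ring.
rewrite E in D2.
rewrite (uniqueness_limite _ _ _ _ D D2).
rewrite (rsum_ext (G := fun i => (if i == s then 1 else 0) *
           rsum (fun j => (if j == sh then 1 else 0) * cPhi PS f f' a i j))).
  by rewrite rsum_delta rsum_delta.
move=> i; rewrite -rsumZ; apply: rsum_ext => j; rewrite /e; ring.
Qed.

Theorem theorem4p1
  (S X Y Sh : finType)
  (hS : inhabited S) (hX : inhabited X) (hY : inhabited Y) (hSh : inhabited Sh)
  (PS : S -> R) (W : X -> Y -> R)
  (hPS : is_pmf PS) (hW : is_kernel W)
  (hPSpos : forall s, 0 < PS s) (hWpos : forall x y, 0 < W x y)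
  (f : R -> R) (hfC1 : C1_pos f) (hfsad : saddle_property f)
  (QXS : S -> X -> R) (QSY : Y -> Sh -> R)
  (hQXS : is_kernel QXS) (hQSY : is_kernel QSY)
  (a : S -> Sh -> R)
  (ha : forall s sh, a s sh =
          rsum (fun x => rsum (fun y => Qjoint PS W QXS QSY s x y sh)) / PS s)
  (b : X -> R)
  (hb : forall x, b x =
          rsum (fun s => rsum (fun y => rsum (fun sh => Qjoint PS W QXS QSY s x y sh))))
  (hapos : forall s sh, 0 < a s sh)
  (lam : R) (hlam : 0 <= lam)
  (hcs : lam * (Psi f W b - Phi f PS a) = 0)
  (mub : R) (mua : S -> R) (nub : X -> R)
  (hnub : forall x, 0 <= nub x) (hnubb : rsum (fun x => nub x * b x) = 0)
  (dPhi : S -> Sh -> R)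
  (hdPhi : forall s sh,
     derivable_pt_lim (fun t => Phi f PS (upd2 a s sh t)) (a s sh) (dPhi s sh))
  (dPsi : X -> R)
  (hdPsi : forall x,
     derivable_pt_lim (fun t => Psi f W (upd1 b x t)) (b x) (dPsi x)) :
  let delta := fun s sh => - (lam / PS s) * dPhi s sh + mua s in
  let rho := fun x => lam * dPsi x + mub + nub x in
  forall (QXS' : S -> X -> R) (QSY' : Y -> Sh -> R),
    is_kernel QXS' -> is_kernel QSY' ->
    rsum (fun s => rsum (fun x => rsum (fun y => rsum (fun sh =>
        Qjoint PS W QXS QSY s x y sh * (delta s sh + rho x)))))
    <=
    rsum (fun s => rsum (fun x => rsum (fun y => rsum (fun sh =>
        Qjoint PS W QXS' QSY' s x y sh * (delta s sh + rho x))))).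
Proof.
move=> delta rho QXS' QSY' k3 k4.
have [f' Hf''] := hfC1.
have Hf' : forall t, 0 < t -> derivable_pt_lim f t (f' t) by move=> t ht; exact: (Hf'' t ht).1.
have hconv := hfsad.1.
have Ea : a = aQ PS W QXS QSY.
  by apply: functional_extensionality => s; apply: functional_extensionality => sh; rewrite ha.
have Eb : b = bQ PS W QXS QSY.
  by apply: functional_extensionality => x; rewrite hb.
subst a b.
set a := aQ PS W QXS QSY in hapos hcs hdPhi *.
set b := bQ PS W QXS QSY in hcs hnubb hdPsi *.
set a' := aQ PS W QXS' QSY'.
set b' := bQ PS W QXS' QSY'.
have pb : is_pmf b by exact: bQ_pmf.
have pb' : is_pmf b' by exact: bQ_pmf.
have hbY := bY_pos W hWpos b pb.
have Epsi : forall x, dPsi x = cPsi W f f' b x.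
  by move=> x; apply: (psi_match W hWpos f f' Hf' b hbY x); exact: hdPsi.
have Ephi : forall s sh, dPhi s sh = cPhi PS f f' a s sh.
  by move=> s sh; apply: (phi_match PS hPSpos f f' Hf' a hapos s sh); exact: hdPhi.
have key : forall (Q1 : S -> X -> R) (Q2 : Y -> Sh -> R), is_kernel Q1 -> is_kernel Q2 ->
  rsum (fun s => rsum (fun x => rsum (fun y => rsum (fun sh =>
        Qjoint PS W Q1 Q2 s x y sh * (delta s sh + rho x))))) =
  - lam * rsum (fun s => rsum (fun sh => aQ PS W Q1 Q2 s sh * dPhi s sh))
  + rsum (fun s => PS s * mua s)
  + lam * rsum (fun x => bQ PS W Q1 Q2 x * dPsi x) + mub
  + rsum (fun x => nub x * bQ PS W Q1 Q2 x).
  move=> Q1 Q2 q1 q2.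
  rewrite (obj_eq PS W hPSpos).
  have E1 : rsum (fun s => rsum (fun sh => aQ PS W Q1 Q2 s sh * PS s * delta s sh)) =
     - lam * rsum (fun s => rsum (fun sh => aQ PS W Q1 Q2 s sh * dPhi s sh))
     + rsum (fun s => PS s * mua s).
    rewrite -rsumZ -rsumD; apply: rsum_ext => s.
    rewrite -rsumZ -[PS s * mua s]Rmult_1_r -(aQ_sum PS W hW hPSpos Q1 Q2 q1 q2 s) -rsumZ -rsumD.
    apply: rsum_ext => sh; rewrite /delta.
    have := hPSpos s; move=> h; field; lra.
  have E2 : rsum (fun x => bQ PS W Q1 Q2 x * rho x) =
     lam * rsum (fun x => bQ PS W Q1 Q2 x * dPsi x) + mub
     + rsum (fun x => nub x * bQ PS W Q1 Q2 x).
    have p := bQ_pmf PS W hPS hW hPSpos Q1 Q2 q1 q2.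
    rewrite -rsumZ -[mub]Rmult_1_r -p.2 -rsumZ -!rsumD.
    by apply: rsum_ext => x; rewrite /rho; ring.
  rewrite E1 E2; ring.
rewrite (key _ _ hQXS hQSY) (key _ _ k3 k4) -/a -/a' -/b -/b'.
have hA := partA W hW hWpos f f' Hf' hfsad b b' pb pb'.
have hB := partB PS W hW hPSpos hWpos f f' Hf' hconv QXS QSY QXS' QSY' hQXS hQSY k3 k4 hapos.
have hC := partC PS W hPS hW hPSpos hWpos f hconv QXS' QSY' k3 k4.
rewrite -/a -/a' -/b' in hB hC.
have EA : rsum (fun x => (b' x - b x) * cPsi W f f' b x) =
   rsum (fun x => b' x * dPsi x) - rsum (fun x => b x * dPsi x).
  rewrite -rsumB; apply: rsum_ext => x; rewrite Epsi; ring.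
have EB : rsum (fun s => rsum (fun sh => (a' s sh - a s sh) * cPhi PS f f' a s sh)) =
   rsum (fun s => rsum (fun sh => a' s sh * dPhi s sh)) - rsum (fun s => rsum (fun sh => a s sh * dPhi s sh)).
  rewrite -rsumB; apply: rsum_ext => s; rewrite -rsumB; apply: rsum_ext => sh; rewrite Ephi; ring.
rewrite EA in hA; rewrite EB in hB.
have hN : 0 <= rsum (fun x => nub x * b' x).
  by apply: rsum_ge0 => x; have := hnub x; have := pb'.1 x; nra.
set A := rsum (fun s => rsum (fun sh => a s sh * dPhi s sh)) in hB *.
set A' := rsum (fun s => rsum (fun sh => a' s sh * dPhi s sh)) in hB *.
set B := rsum (fun x => b x * dPsi x) in hA *.
set B' := rsum (fun x => b' x * dPsi x) in hA *.
have : 0 <= lam * ((B' - B) - (A' - A)).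
  have H : Phi f PS a - Psi f W b <= (B' - B) - (A' - A) by lra.
  have E0 : lam * (Phi f PS a - Psi f W b) = - (lam * (Psi f W b - Phi f PS a)) by ring.
  rewrite hcs Ropp_0 in E0.
  have := Rmult_le_compat_l lam _ _ hlam H.
  lra.
lra.
Qed.
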